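(* Let $G$ be a simple digraph with $n$ vertices $v_1,\ldots,v_n$ and $m$ arcs, and let $M_1=m+\frac12\sum_{i=1}^n(d_i^+-d_i^-)^2$. Then $SLE(G)\le\sqrt{2M_1 n}$.
   Context: A simple digraph is an orientation of a simple undirected graph (no loops, and between two distinct vertices at most one arc, in one direction). $d_i^+,d_i^-$ are the out- and in-degree of $v_i$. The skew-adjacency matrix $S(G)=[s_{ij}]$ has $s_{ij}=1$ if $(v_i,v_j)$ is an arc, $s_{ij}=-1$ if $(v_j,v_i)$ is an arc, and $0$ otherwise. $\widetilde{D}(G)=\mathrm{diag}(d_1^+-d_1^-,\ldots,d_n^+-d_n^-)$, $\widetilde{SL}(G)=\widetilde{D}(G)-S(G)$, and $SLE(G)=\sum_{i=1}^n|\mu_i|$ where $\mu_1,\ldots,\mu_n$ are the eigenvalues of $\widetilde{SL}(G)$ counted with algebraic multiplicity. *)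

(* Defs.v *)
(* eigenvalues taken in algC (algebraically closed, char 0). *)
From HB Require Import structures.
From mathcomp Require Import all_boot all_order all_algebra all_field.
Set Implicit Arguments. Unset Strict Implicit. Unset Printing Implicit Defensive.
Import Order.TTheory GRing.Theory Num.Theory.
Local Open Scope ring_scope.

(* A simple digraph on vertices 'I_n is an arc relation [arc i j] ("(v_i,v_j) is an arc")
   which is loopless and has at most one arc between two distinct vertices. *)
Definition simple_digraph (n : nat) (arc : rel 'I_n) : Prop :=
  (forall i, ~~ arc i i) /\ (forall i j, ~~ (arc i j && arc j i)).

Definition num_arcs n (arc : rel 'I_n) : nat :=
  #|[set p : 'I_n * 'I_n | arc p.1 p.2]|.

Definition outdeg n (arc : rel 'I_n) (i : 'I_n) : nat := #|[set j | arc i j]|.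
Definition indeg n (arc : rel 'I_n) (i : 'I_n) : nat := #|[set j | arc j i]|.

Definition degdiff n (arc : rel 'I_n) (i : 'I_n) : algC :=
  (outdeg arc i)%:R - (indeg arc i)%:R.

Definition skew_adj n (arc : rel 'I_n) : 'M[algC]_n :=
  \matrix_(i, j) (if arc i j then 1 else if arc j i then -1 else 0).

Definition Dtilde n (arc : rel 'I_n) : 'M[algC]_n :=
  diag_mx (\row_i degdiff arc i).

Definition SLtilde n (arc : rel 'I_n) : 'M[algC]_n := Dtilde arc - skew_adj arc.

Definition M1 n (arc : rel 'I_n) : algC :=
  (num_arcs arc)%:R + 2^-1 * \sum_i (degdiff arc i) ^+ 2.

(* Main.v *)
Require Import Defs.
From mathcomp Require Import all_boot all_order all_algebra all_field.
From mathcomp Require Import ring.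
Import Order.TTheory GRing.Theory Num.Theory.
Local Open Scope ring_scope.
Local Open Scope sesquilinear_scope.
Lemma char_poly_conj n (A P Q : 'M[algC]_n) :
  Q *m P = 1%:M -> char_poly (P *m A *m Q) = char_poly A.
Proof.
move=> QP; have PQ : P *m Q = 1%:M by apply: mulmx1C.
rewrite /char_poly /char_poly_mx.
have -> : 'X%:M - map_mx polyC (P *m A *m Q) =
  map_mx polyC P *m ('X%:M - map_mx polyC A) *m map_mx polyC Q.
  have PQ' : map_mx (@polyC algC) P *m map_mx polyC Q = 1%:M.
    by rewrite -map_mxM PQ map_mx1.
  rewrite mulmxBr mulmxBl !map_mxM mul_mx_scalar -scalemxAl PQ'.
  by rewrite scale_scalar_mx mulr1.
have QP' : map_mx (@polyC algC) Q *m map_mx polyC P = 1%:M.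
  by rewrite -map_mxM QP map_mx1.
by rewrite !det_mulmx mulrC mulrA -det_mulmx QP' det1 mul1r.
Qed.

Definition frob {n} (M : 'M[algC]_n) := \sum_i \sum_j `|M i j| ^+ 2.

Lemma frobE n (M : 'M[algC]_n) : frob M = \tr (M *m M ^t*).
Proof.
rewrite /frob /mxtrace; apply: eq_bigr => i _; rewrite mxE.
by apply: eq_bigr => j _; rewrite !mxE normCK.
Qed.

Lemma frob_unitary n (A P : 'M[algC]_n) : P \is unitarymx ->
  frob (P *m A *m P ^t*) = frob A.
Proof.
move=> Pu; have PP : P ^t* *m P = 1%:M.
  by rewrite -invmx_unitary // mulVmx // unitarymx_unit.
rewrite !frobE.
have -> : (P *m A *m P ^t*) ^t* = P *m A ^t* *m P ^t*.
  by rewrite !trmx_mul !map_mxM trmxCK mulmxA.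
by rewrite -!mulmxA (mulmxA (P ^t*)) PP mul1mx mxtrace_mulC -!mulmxA PP mulmx1.
Qed.

Lemma degdiff_real n (arc : rel 'I_n) i : degdiff arc i \is Num.real.
Proof. by rewrite /degdiff rpredB // realn. Qed.

Lemma SL_entry n (arc : rel 'I_n) i j : simple_digraph arc ->
  `|SLtilde arc i j| ^+ 2 =
  (i == j)%:R * degdiff arc i ^+ 2 + (arc i j)%:R + (arc j i)%:R.
Proof.
case=> noloop asym.
rewrite /SLtilde /Dtilde /skew_adj !mxE.
case: eqVneq => [<-|ij].
  rewrite (negbTE (noloop i)) /= mulr1n mul1r subr0 real_normK ?degdiff_real //.
  by rewrite !addr0.
rewrite mulr0n mul0r sub0r normrN add0r.
have := asym i j; case: (arc i j); case: (arc j i) => //= _.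
- by rewrite normr1 expr1n addr0.
- by rewrite normrN normr1 expr1n add0r.
- by rewrite normr0 expr0n /= addr0.
Qed.

Lemma num_arcsE n (arc : rel 'I_n) :
  (num_arcs arc)%:R = \sum_i \sum_j (arc i j)%:R :> algC.
Proof.
rewrite /num_arcs -sum1_card.
rewrite natr_sum pair_big /= big_mkcond /=.
apply: eq_bigr => [[i j]] _; rewrite inE /=.
by case: (arc i j).
Qed.

Lemma frob_SL n (arc : rel 'I_n) : simple_digraph arc ->
  frob (SLtilde arc) = 2 * M1 arc.
Proof.
move=> sd; rewrite /frob.
under eq_bigr => i _ do under eq_bigr => j _ do rewrite SL_entry //.
under eq_bigr => i _ do rewrite !big_split /=.
rewrite !big_split /=.
have -> : \sum_(i < n) \sum_(j < n) (i == j)%:R * degdiff arc i ^+ 2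
          = \sum_i degdiff arc i ^+ 2.
  apply: eq_bigr => i _; rewrite (bigD1 i) //= eqxx mul1r big1 ?addr0 //.
  by move=> j /negbTE; rewrite eq_sym => ->; rewrite mul0r.
rewrite -num_arcsE exchange_big /= -num_arcsE /M1.
by field.
Qed.
Lemma cauchy_schwarz n (a : 'I_n -> algC) : (forall i, a i \is Num.real) ->
  (\sum_i a i) ^+ 2 <= n%:R * \sum_i a i ^+ 2.
Proof.
move=> ar.
have H0 : 0 <= \sum_i \sum_j (a i - a j) ^+ 2.
  apply: sumr_ge0 => i _; apply: sumr_ge0 => j _.
  by rewrite -real_normK ?rpredB // exprn_ge0.
set S := \sum_i a i; set Q := \sum_i a i ^+ 2.
have E1 : S ^+ 2 = \sum_i \sum_j a i * a j.
  by rewrite expr2 mulr_suml; apply: eq_bigr => i _; rewrite mulr_sumr.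
have E2 : \sum_i \sum_j (a i - a j) ^+ 2 =
   \sum_(i < n) \sum_(j < n) a i ^+ 2 + \sum_(i < n) \sum_(j < n) a j ^+ 2
   - (\sum_i \sum_j a i * a j) *+ 2.
  transitivity (\sum_i \sum_j (a i ^+ 2 + a j ^+ 2 - (a i * a j) *+ 2)).
    by apply: eq_bigr => i _; apply: eq_bigr => j _; rewrite sqrrB; ring.
  under eq_bigr => i _ do rewrite sumrB big_split /= sumrMnl.
  by rewrite sumrB big_split /= sumrMnl.
have E3 : \sum_(i < n) \sum_(j < n) a i ^+ 2 = n%:R * Q :> algC.
  rewrite /Q mulr_sumr; apply: eq_bigr => i _.
  by rewrite sumr_const card_ord mulr_natl.
have E4 : \sum_(i < n) \sum_j a j ^+ 2 = n%:R * Q :> algC.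
  by rewrite sumr_const card_ord mulr_natl.
rewrite E2 E3 E4 -E1 in H0.
rewrite -subr_ge0.
have -> : n%:R * Q - S ^+ 2 = (n%:R * Q + n%:R * Q - S ^+ 2 *+ 2) / 2.
  by field.
by rewrite divr_ge0 // ler0n.
Qed.

Theorem corollary2 (n : nat) (arc : rel 'I_n) (rs : seq algC) :
  simple_digraph arc ->
  char_poly (SLtilde arc) = \prod_(z <- rs) ('X - z%:P) ->
  \sum_(z <- rs) `|z| <= sqrtC (2 * M1 arc * n%:R).
Proof.
move=> sd hcp.
case: n => [|n] in arc rs sd hcp *.
  have := congr1 (fun p : {poly algC} => size p) hcp; rewrite size_char_poly size_prod_XsubC.
  by case: rs {hcp} => //= _; rewrite big_nil mulr0 sqrtC0.
set A := SLtilde arc.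
have [P Pu Ptrig] := Schur A (ltn0Sn n).
move: Ptrig; rewrite /similar_to conjymx // => Ttrig.
set T := P *m A *m P ^t* in Ttrig.
have PP : P ^t* *m P = 1%:M.
  by rewrite -invmx_unitary // mulVmx // unitarymx_unit.
have cpT : char_poly T = char_poly A by apply: char_poly_conj.
have hperm : perm_eq rs [seq T i i | i <- enum 'I_n.+1].
  apply: prod_XsubC_eq; rewrite -hcp -cpT char_poly_trig // big_map big_enum /=.
  by [].
rewrite (perm_big _ hperm) big_map big_enum /=.
set s := \sum_i `|T i i|.
have s0 : 0 <= s by apply: sumr_ge0 => i _; exact: normr_ge0.
have hs : s ^+ 2 <= 2 * M1 arc * n.+1%:R.
  have := @cauchy_schwarz _ (fun i => `|T i i|) (fun i => normr_real _).
  move/le_trans; apply.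
  rewrite [X in _ <= X]mulrC ler_pM2l ?ltr0n //.
  rewrite -frob_SL // -/A -(@frob_unitary _ A P Pu) -/T /frob.
  apply: ler_sum => i _; rewrite (bigD1 i) //= lerDl.
  by apply: sumr_ge0 => j _; rewrite exprn_ge0.
rewrite -(sqrCK s0) ler_sqrtC // qualifE /=.
  by rewrite exprn_ge0.
exact: le_trans (exprn_ge0 _ s0) hs.
Qed.
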